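(* Let $p$ be a prime, let $\{t_i\mid i\in\mathbb N\}$ be algebraically independent over $\mathbb F_p$, let $k=\mathbb F_p(\{t_i\mid i\in\mathbb N\})$ with algebraic closure $\overline k$, and let $\sigma(x)=\sum_{i=1}^\infty t_i^{1/p}x^i\in\overline k[[x]]$. Let $R=k[u,v]_{(u,v)}$ and let $\pi:R\to\overline k[[x]]$ be the $k$-algebra homomorphism with $\pi(u)=x$, $\pi(v)=\sigma(x)$. Then $\pi$ is injective, so the $x$-adic order valuation on $\overline k[[x]]$ induces a rank 1 valuation $\nu$ of the quotient field of $R$, and the valuation ring $V$ of $\nu$ has residue field $V/m_V\cong k(t_1^{1/p})$, a finite extension of $k$ (whereas the field $k(\{t_i^{1/p}\mid i\in\mathbb N\})$ generated by the coefficients of $\sigma$ has infinite degree over $k$). *)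

(* Defs.v *)
From HB Require Import structures.
From mathcomp Require Import all_boot all_order all_algebra.
Set Implicit Arguments. Unset Strict Implicit. Unset Printing Implicit Defensive.
Import Order.TTheory GRing.Theory Num.Theory.
Local Open Scope ring_scope.

Definition subfield_closed (K : fieldType) (F : K -> Prop) : Prop :=
  [/\ F 1,
      (forall x y, F x -> F y -> F (x - y)),
      (forall x y, F x -> F y -> F (x * y)) &
      (forall x, F x -> F x^-1)].

Definition in_gen_field (K : fieldType) (S : K -> Prop) (x : K) : Prop :=
  forall F : K -> Prop, subfield_closed F -> (forall y, S y -> F y) -> F x.

Definition in_ext_gen (k L : fieldType) (iota : k -> L) (S : L -> Prop)
  (x : L) : Prop :=
  in_gen_field (fun y => (exists a, y = iota a) \/ S y) x.

(* The family t : nat -> k is algebraically independent over the prime field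
   of k: distinct monomials in finitely many t_i are linearly independent
   over the prime field (coefficients are integers, mapped into k). *)
Definition alg_indep_prime (k : fieldType) (t : nat -> k) : Prop :=
  forall (n : nat) (S : seq {ffun 'I_n -> nat}) (c : {ffun 'I_n -> nat} -> int),
    uniq S ->
    \sum_(e <- S) (c e)%:~R * \prod_(i < n) t i ^+ e i = 0 ->
    forall e, e \in S -> (c e)%:~R = 0 :> k.

Definition lin_indep_over (k L : fieldType) (iota : k -> L) (n : nat)
  (e : 'I_n -> L) : Prop :=
  forall c : 'I_n -> k, \sum_(i < n) iota (c i) * e i = 0 -> forall i, c i = 0.

Definition spans_over (k L : fieldType) (iota : k -> L) (P : L -> Prop)
  (n : nat) (e : 'I_n -> L) : Prop :=
  forall x, P x -> exists c : 'I_n -> k, x = \sum_(i < n) iota (c i) * e i.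

Definition sigmaN (L : fieldType) (s : nat -> L) (N : nat) : {poly L} :=
  \sum_(1 <= i < N) s i *: 'X^i.

(* Elements of k[u,v] are represented as P : {poly {poly k}},
   P = sum_j P_j(u) v^j.  pi(P) = sum_j P_j(x) sigma(x)^j in L[[x]];
   its n-th coefficient is computed from the truncation of sigma at
   degree n (higher terms of sigma do not affect the coefficient of x^n). *)
Definition pi_coef (k L : fieldType) (iota : {rmorphism k -> L})
  (s : nat -> L) (P : {poly {poly k}}) (n : nat) : L :=
  ((map_poly (map_poly iota) P).[sigmaN s n.+1])`_n.

Definition pi_ord (k L : fieldType) (iota : {rmorphism k -> L})
  (s : nat -> L) (P : {poly {poly k}}) (n : nat) : Prop :=
  pi_coef iota s P n != 0 /\ forall m, (m < n)%N -> pi_coef iota s P m = 0.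

(* the quotient field of R = k[u,v]_(u,v), which is the quotient field of k[u,v] *)
Definition QF (k : fieldType) := {fraction {poly {poly k}}}.

Definition tofracK (k : fieldType) (P : {poly {poly k}}) : QF k :=
  FracField.tofrac P.

Definition in_V (k L : fieldType) (iota : {rmorphism k -> L}) (s : nat -> L)
  (z : QF k) : Prop :=
  exists (f g : {poly {poly k}}) (n : nat),
    [/\ g != 0, z = tofracK f / tofracK g, pi_ord iota s g n &
        forall m, (m < n)%N -> pi_coef iota s f m = 0].

Definition in_mV (k L : fieldType) (iota : {rmorphism k -> L}) (s : nat -> L)
  (z : QF k) : Prop :=
  exists (f g : {poly {poly k}}) (n : nat),
    [/\ g != 0, z = tofracK f / tofracK g, pi_ord iota s g n &
        forall m, (m <= n)%N -> pi_coef iota s f m = 0].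

(* Main.v *)
Require Import Defs.
From HB Require Import structures.
From mathcomp Require Import all_boot all_order all_algebra.
From Stdlib Require Import ClassicalEpsilon.
Set Implicit Arguments. Unset Strict Implicit. Unset Printing Implicit Defensive.
Import GRing.Theory.
Local Open Scope ring_scope.

Section GenField.
Variable K : fieldType.
Implicit Types F S : K -> Prop.

Lemma sfc1 F : subfield_closed F -> F 1. Proof. by case. Qed.
Lemma sfcB F x y : subfield_closed F -> F x -> F y -> F (x - y). Proof. by case=> _ H _ _; apply: H. Qed.
Lemma sfcM F x y : subfield_closed F -> F x -> F y -> F (x * y). Proof. by case=> _ _ H _; apply: H. Qed.
Lemma sfcV F x : subfield_closed F -> F x -> F x^-1. Proof. by case=> _ _ _ H; apply: H. Qed.
Lemma sfc0 F : subfield_closed F -> F 0.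
Proof. by move=> hF; rewrite -(subrr 1); apply: sfcB=> //; apply: sfc1. Qed.
Lemma sfcN F x : subfield_closed F -> F x -> F (- x).
Proof. by move=> hF hx; rewrite -sub0r; apply: sfcB => //; apply: sfc0. Qed.
Lemma sfcD F x y : subfield_closed F -> F x -> F y -> F (x + y).
Proof. by move=> hF hx hy; rewrite -[y]opprK; apply: sfcB => //; apply: sfcN. Qed.
Lemma sfc_div F x y : subfield_closed F -> F x -> F y -> F (x / y).
Proof. by move=> hF hx hy; apply: sfcM => //; apply: sfcV. Qed.
Lemma sfcX F x m : subfield_closed F -> F x -> F (x ^+ m).
Proof.
move=> hF hx; elim: m => [|m IH]; first by rewrite expr0; apply: sfc1.
by rewrite exprS; apply: sfcM.
Qed.
Lemma sfc_nat F m : subfield_closed F -> F m%:R.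
Proof.
move=> hF; elim: m => [|m IH]; first exact: sfc0.
by rewrite -addn1 natrD; apply: sfcD => //; apply: sfc1.
Qed.
Lemma sfc_int F z : subfield_closed F -> F z%:~R.
Proof.
move=> hF; case: z => m; first exact: sfc_nat.
by rewrite NegzE mulrNz; apply: sfcN => //; apply: sfc_nat.
Qed.
Lemma sfc_sum F I (r : seq I) (P : pred I) (G : I -> K) :
  subfield_closed F -> (forall i, P i -> F (G i)) -> F (\sum_(i <- r | P i) G i).
Proof.
move=> hF hG; elim/big_rec: _ => [|i x Pi Fx]; first exact: sfc0.
by apply: sfcD => //; apply: hG.
Qed.
Lemma sfc_prod F I (r : seq I) (P : pred I) (G : I -> K) :
  subfield_closed F -> (forall i, P i -> F (G i)) -> F (\prod_(i <- r | P i) G i).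
Proof.
move=> hF hG; elim/big_rec: _ => [|i x Pi Fx]; first exact: sfc1.
by apply: sfcM => //; apply: hG.
Qed.

Lemma gen_closed S : subfield_closed (in_gen_field S).
Proof.
split.
- by move=> F hF _; apply: sfc1.
- by move=> x y hx hy F hF hS; apply: sfcB => //; [apply: hx | apply: hy].
- by move=> x y hx hy F hF hS; apply: sfcM => //; [apply: hx | apply: hy].
- by move=> x hx F hF hS; apply: sfcV => //; apply: hx.
Qed.
Lemma gen_sub S y : S y -> in_gen_field S y.
Proof. by move=> hy F _ hS; apply: hS. Qed.
Lemma gen_min S F x : subfield_closed F -> (forall y, S y -> F y) ->
  in_gen_field S x -> F x.
Proof. by move=> hF hS hx; apply: hx. Qed.
Lemma gen_mono S S' x : (forall y, S y -> S' y) ->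
  in_gen_field S x -> in_gen_field S' x.
Proof.
move=> hSS hx; apply: (gen_min (gen_closed S')) hx => y hy.
by apply: gen_sub; apply: hSS.
Qed.
End GenField.

Lemma big_pred1_seqU (R : nmodType) (I : eqType) (r : seq I) (i : I) (F : I -> R) :
  uniq r -> i \in r -> \sum_(j <- r | j == i) F j = F i.
Proof.
move=> ur ir; rewrite big_mkcond (bigD1_seq i) //= eqxx big1 ?addr0 //.
by move=> j /negbTE ->.
Qed.

Section Reps.
Variable k : fieldType.
Variable t : nat -> k.
Variable n : nat.
Definition mono := {ffun 'I_n -> nat}.
Definition mval (e : mono) : k := \prod_(i < n) t i ^+ e i.
Definition rep := seq (mono * int).
Definition rval (l : rep) : k := \sum_(x <- l) (x.2)%:~R * mval x.1.
Definition csum (l : rep) (e : mono) : int := \sum_(x <- l | x.1 == e) x.2.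

Lemma rval_undup l :
  rval l = \sum_(e <- undup (map fst l)) (csum l e)%:~R * mval e.
Proof.
rewrite /csum.
under eq_bigr => e _ do rewrite rmorph_sum mulr_suml.
rewrite (exchange_big_dep predT) //=.
rewrite /rval; apply: eq_big_seq => x xl.
under eq_bigl => e do rewrite eq_sym.
rewrite (big_pred1_seqU (fun e => x.2%:~R * mval e)) ?undup_uniq //.
by rewrite mem_undup; apply: map_f.
Qed.

Lemma csum_notin l e : e \notin map fst l -> csum l e = 0.
Proof.
move=> en; rewrite /csum big_seq_cond big1 // => x /andP[xl /eqP ex].
by case/negP: en; rewrite -ex; apply: map_f.
Qed.

Lemma rval_ind : alg_indep_prime t -> forall l, rval l = 0 ->
  forall e, (csum l e)%:~R = 0 :> k.
Proof.
move=> hI l hl e.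
have [ein|enot] := boolP (e \in map fst l); last by rewrite csum_notin.
have := hI n (undup (map fst l)) (csum l) (undup_uniq _).
by rewrite -rval_undup hl => /(_ erefl e); apply; rewrite mem_undup.
Qed.

Lemma rval_zero l : (forall e, (csum l e)%:~R = 0 :> k) -> rval l = 0.
Proof. by move=> h; rewrite rval_undup big1 // => e _; rewrite h mul0r. Qed.

Definition madd (e1 e2 : mono) : mono := [ffun i => (e1 i + e2 i)%N].
Definition mzero : mono := [ffun _ => 0%N].
Definition mscale (m : nat) (e : mono) : mono := [ffun i => (m * e i)%N].

Lemma mval_add e1 e2 : mval (madd e1 e2) = mval e1 * mval e2.
Proof. by rewrite /mval -big_split; apply: eq_bigr => i _; rewrite ffunE exprD. Qed.
Lemma mval_zero : mval mzero = 1.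
Proof. by rewrite /mval big1 // => i _; rewrite ffunE expr0. Qed.
Lemma mval_scale m e : mval (mscale m e) = mval e ^+ m.
Proof.
rewrite /mval -prodrXl; apply: eq_bigr => i _.
by rewrite ffunE mulnC exprM.
Qed.

Definition rmul (l1 l2 : rep) : rep :=
  [seq (madd x.1 y.1, x.2 * y.2) | x <- l1, y <- l2].
Definition rneg (l : rep) : rep := map (fun x => (x.1, - x.2)) l.
Definition rone : rep := [:: (mzero, 1)].
Definition rshft (r : mono) (l : rep) : rep := map (fun x => (madd x.1 r, x.2)) l.
Definition rfrob (m : nat) (l : rep) : rep :=
  map (fun x => (mscale m x.1, x.2 ^+ m)) l.

Lemma rval_cat l1 l2 : rval (l1 ++ l2) = rval l1 + rval l2.
Proof. by rewrite /rval big_cat. Qed.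
Lemma rval_nil : rval [::] = 0.
Proof. by rewrite /rval big_nil. Qed.
Lemma rval_neg l : rval (rneg l) = - rval l.
Proof.
rewrite /rval big_map -sumrN; apply: eq_bigr => x _.
by rewrite /= mulrNz mulNr.
Qed.
Lemma rval_one : rval rone = 1.
Proof. by rewrite /rval big_seq1 /= mval_zero mulr1. Qed.
Lemma rval_shift r l : rval (rshft r l) = rval l * mval r.
Proof.
rewrite /rval big_map mulr_suml; apply: eq_bigr => x _.
by rewrite /= mval_add mulrA.
Qed.
Lemma rval_mul l1 l2 : rval (rmul l1 l2) = rval l1 * rval l2.
Proof.
elim: l1 => [|x l1 IH]; first by rewrite /rmul /= rval_nil mul0r.
rewrite /rmul /= rval_cat -/(rmul l1 l2) IH.
rewrite /rval big_cons mulrDl; congr (_ + _).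
rewrite big_map mulr_sumr; apply: eq_bigr => y _ /=.
by rewrite intrM mval_add mulrACA.
Qed.
Lemma rval_frob m l : m \in [pchar k] -> rval (rfrob m l) = rval l ^+ m.
Proof.
move=> hm; rewrite /rval big_map.
have -> : (\sum_(x <- l) x.2%:~R * mval x.1) ^+ m =
   pFrobenius_aut hm (\sum_(x <- l) x.2%:~R * mval x.1) by [].
rewrite rmorph_sum; apply: eq_bigr => x _ /=.
by rewrite pFrobenius_autE exprMn rmorphXn mval_scale.
Qed.
End Reps.

Section GenIdx.
Variable k : fieldType.
Variable t : nat -> k.
Definition gen_idx (P : pred nat) (x : k) :=
  in_gen_field (fun y => exists2 i, P i & y = t i) x.

Lemma gen_idx_mono (P P' : pred nat) x : (forall i, P i -> P' i) ->
  gen_idx P x -> gen_idx P' x.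
Proof.
move=> hP; apply: gen_mono => y [i Pi ->]; exists i => //; exact: hP.
Qed.

Lemma fin_gen (P : pred nat) x : gen_idx P x ->
  exists N, gen_idx (fun i => (i < N)%N && P i) x.
Proof.
move=> hx.
pose G y := exists N, gen_idx (fun i => (i < N)%N && P i) y.
have mono : forall N N' y, (N <= N')%N -> gen_idx (fun i => (i < N)%N && P i) y ->
    gen_idx (fun i => (i < N')%N && P i) y.
  move=> N N' y hN; apply: gen_idx_mono => i /andP[hi ->].
  by rewrite (leq_trans hi hN).
have hG : subfield_closed G.
  split.
  - by exists 0%N; exact: (sfc1 (gen_closed _)).
  - move=> a b [N1 h1] [N2 h2]; exists (maxn N1 N2).
    apply: (sfcB (gen_closed _)).
    + by apply: mono h1; apply: leq_maxl.
    + by apply: mono h2; apply: leq_maxr.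
  - move=> a b [N1 h1] [N2 h2]; exists (maxn N1 N2).
    apply: (sfcM (gen_closed _)).
    + by apply: mono h1; apply: leq_maxl.
    + by apply: mono h2; apply: leq_maxr.
  - move=> a [N1 h1]; exists N1; exact: (sfcV (gen_closed _)).
apply: (gen_min hG) hx => y [i Pi ->]; exists i.+1.
by apply: gen_sub; exists i; rewrite ?ltnSn.
Qed.

Lemma fin_gen_seq (P : pred nat) (c : nat -> k) m :
  (forall i, (i < m)%N -> gen_idx P (c i)) ->
  exists N, forall i, (i < m)%N -> gen_idx (fun j => (j < N)%N && P j) (c i).
Proof.
elim: m => [|m IH] h; first by exists 0%N.
have [N1 h1] := IH (fun i hi => h i (ltnW hi)).
have [N2 h2] := fin_gen (h m (ltnSn m)).
exists (maxn N1 N2) => i; rewrite ltnS leq_eqVlt => /orP[/eqP ->|hi].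
- apply: gen_idx_mono h2 => j /andP[hj ->]; by rewrite (leq_trans hj) ?leq_maxr.
- apply: gen_idx_mono (h1 i hi) => j /andP[hj ->]; by rewrite (leq_trans hj) ?leq_maxl.
Qed.
End GenIdx.

Section RepField.
Variable k : fieldType.
Variable t : nat -> k.
Variable n M : nat.
Local Notation mono := (mono n).
Local Notation rep := (rep n).
Local Notation rval := (rval t).

Definition okm (e : mono) : bool := [forall i : 'I_n, (i == M :> nat) ==> (e i == 0%N)].
Definition okl (l : rep) : bool := all (fun x => okm x.1) l.

Lemma okm_add e1 e2 : okm e1 -> okm e2 -> okm (madd e1 e2).
Proof.
move=> /forallP h1 /forallP h2; apply/forallP => i; apply/implyP => hi.
by rewrite ffunE (eqP (implyP (h1 i) hi)) (eqP (implyP (h2 i) hi)).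
Qed.
Lemma okl_cat l1 l2 : okl (l1 ++ l2) = okl l1 && okl l2.
Proof. by rewrite /okl all_cat. Qed.
Lemma okl_neg l : okl (rneg l) = okl l.
Proof. by rewrite /okl all_map. Qed.
Lemma okl_one : okl (rone n).
Proof. by rewrite /okl /= andbT; apply/forallP => i; rewrite ffunE eqxx implybT. Qed.
Lemma okl_mul l1 l2 : okl l1 -> okl l2 -> okl (rmul l1 l2).
Proof.
move=> /allP h1 /allP h2; apply/allP => z /allpairsP[[x y] [xl yl ->]] /=.
by apply: okm_add; [apply: h1 | apply: h2].
Qed.

Definition Rep (x : k) := exists a b : rep,
  [/\ okl a, okl b, rval b != 0 & x * rval b = rval a].

Lemma Rep_closed : subfield_closed Rep.
Proof.
split.
- exists (rone n), (rone n); rewrite okl_one rval_one oner_eq0 mul1r; split=> //.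
- move=> x y [a [b [oa ob nb eb]]] [a' [b' [oa' ob' nb' eb']]].
  exists (rmul a b' ++ rneg (rmul a' b)), (rmul b b'); split.
  + by rewrite okl_cat okl_neg !okl_mul.
  + by rewrite okl_mul.
  + by rewrite rval_mul mulf_neq0.
  + rewrite rval_cat rval_neg !rval_mul -eb -eb' mulrBl.
    congr (_ - _); first by rewrite mulrA.
    by rewrite mulrA mulrAC.
- move=> x y [a [b [oa ob nb eb]]] [a' [b' [oa' ob' nb' eb']]].
  exists (rmul a a'), (rmul b b'); split.
  + by rewrite okl_mul.
  + by rewrite okl_mul.
  + by rewrite rval_mul mulf_neq0.
  + by rewrite !rval_mul -eb -eb' mulrACA.
- move=> x [a [b [oa ob nb eb]]].
  have [->|x0] := eqVneq x 0.
    exists [::], (rone n); rewrite invr0 mul0r rval_nil okl_one rval_one oner_eq0.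
    by split.
  exists b, a; split=> //.
    by rewrite -eb mulf_neq0.
  by rewrite -eb mulrA mulVf // mul1r.
Qed.

Lemma Rep_t i : (i < n)%N -> i != M -> Rep (t i).
Proof.
move=> hi hM.
exists [:: ([ffun j : 'I_n => (j == Ordinal hi) : nat], 1)], (rone n); split.
- rewrite /okl /= andbT; apply/forallP => j; apply/implyP => /eqP jM.
  rewrite ffunE; case: (j =P Ordinal hi) => [jE|//]; case/negP: hM.
  by rewrite -jM jE.
- exact: okl_one.
- by rewrite rval_one oner_eq0.
- rewrite rval_one mulr1 /rval big_seq1 /= mul1r /mval (bigD1 (Ordinal hi)) //=.
  rewrite ffunE eqxx expr1 big1 ?mulr1 // => j /negbTE hj.
  by rewrite ffunE hj expr0.
Qed.

Lemma gen_Rep x : gen_idx t (fun i => (i < n)%N && (i != M)) x -> Rep x.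
Proof.
apply: gen_min; first exact: Rep_closed.
by move=> y [i /andP[hi hM] ->]; apply: Rep_t.
Qed.

Lemma common_den (c : nat -> k) m : (forall i, (i < m)%N -> Rep (c i)) ->
  exists (b : rep) (A : nat -> rep), [/\ okl b, rval b != 0 &
    forall i, (i < m)%N -> okl (A i) /\ c i * rval b = rval (A i)].
Proof.
elim: m => [|m IH] h.
  exists (rone n), (fun _ => [::]); rewrite okl_one rval_one oner_eq0; by split.
have [b [A [ob nb hA]]] := IH (fun i hi => h i (ltnW hi)).
have [a' [b' [oa' ob' nb' eb']]] := h m (ltnSn m).
exists (rmul b b'), (fun i => if i == m then rmul a' b else rmul (A i) b'); split.
- by rewrite okl_mul.
- by rewrite rval_mul mulf_neq0.
- move=> i; rewrite ltnS leq_eqVlt => /orP[/eqP ->|hi].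
    rewrite eqxx okl_mul // rval_mul !rval_mul -eb'; split=> //.
    by rewrite mulrA mulrAC.
  rewrite (ltn_eqF hi); have [o e] := hA i hi.
  by rewrite okl_mul // rval_mul rval_mul -e mulrA.
Qed.
End RepField.

Section RepMore.
Variable k : fieldType.
Variable t : nat -> k.
Variable n : nat.
Lemma rval_flatten (ll : seq (rep n)) : rval t (flatten ll) = \sum_(l <- ll) rval t l.
Proof. by rewrite /rval big_flatten. Qed.
Lemma csum_flatten (ll : seq (rep n)) e : csum (flatten ll) e = \sum_(l <- ll) csum l e.
Proof. by rewrite /csum big_flatten. Qed.
Lemma csum_shift r (l : rep n) e :
  csum (rshft r l) e = \sum_(x <- l | madd x.1 r == e) x.2.
Proof. by rewrite /csum big_map. Qed.
Lemma csum_shift_frob m r (l : rep n) e :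
  csum (rshft r (rfrob m l)) e = \sum_(x <- l | madd (mscale m x.1) r == e) x.2 ^+ m.
Proof. by rewrite /csum /rshft /rfrob -map_comp big_map. Qed.
Lemma madd_inj (a b r : mono n) : madd a r = madd b r -> a = b.
Proof.
move=> h; apply/ffunP => i; have := congr1 (fun f : mono n => f i) h.
by rewrite !ffunE => /addIn.
Qed.
End RepMore.

Section Indep.
Variable k : fieldType.
Variable t : nat -> k.
Hypothesis hI : alg_indep_prime t.

Lemma transc M d (c : nat -> k) :
  (forall i, (i <= d)%N -> gen_idx t (fun j => j != M) (c i)) ->
  \sum_(i < d.+1) c i * t M ^+ i = 0 -> forall i, (i <= d)%N -> c i = 0.
Proof.
move=> hc hs.
have [N hN] := @fin_gen_seq k t (fun j => j != M) c d.+1 hc.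
set n := maxn N M.+1.
have hM : (M < n)%N by rewrite leq_maxr.
have hR : forall i, (i < d.+1)%N -> Rep t n M (c i).
  move=> i hi; apply: gen_Rep; apply: gen_idx_mono (hN i hi) => j /andP[hj ->].
  by rewrite (leq_trans hj) ?leq_maxl.
have [b [A [ob nb hA]]] := common_den hR.
pose Mo := Ordinal hM.
pose mp (i : nat) : mono n := [ffun j => if j == Mo then i else 0%N].
have mval_mp i : mval t (mp i) = t M ^+ i.
  rewrite /mval (bigD1 Mo) //= ffunE eqxx big1 ?mulr1 // => j /negbTE hj.
  by rewrite ffunE hj expr0.
pose Lc := flatten [seq rshft (mp i) (A i) | i <- iota 0 d.+1].
have hL : rval t Lc = 0.
  rewrite rval_flatten big_map.
  transitivity ((\sum_(i < d.+1) c i * t M ^+ i) * rval t b); last by rewrite hs mul0r.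
  rewrite mulr_suml -(big_mkord xpredT (fun i => c i * t M ^+ i * rval t b)).
  rewrite /index_iota subn0 big_seq [in RHS]big_seq; apply: eq_bigr => i.
  rewrite mem_iota add0n => /andP[_ hi].
  by rewrite rval_shift mval_mp -(proj2 (hA i hi)) mulrAC.
have hmp i j : (mp i) Mo = i by rewrite ffunE eqxx.
move=> i0 hi0.
have [oA eA] := hA i0 hi0.
suff : rval t (A i0) = 0.
  by rewrite -eA => /eqP; rewrite mulf_eq0 (negbTE nb) orbF => /eqP.
apply: rval_zero => e.
have [oke|noke] := boolP (okm M e); last first.
  rewrite /csum big_seq_cond big1 // => x /andP[xA /eqP ex].
  by case/negP: noke; rewrite -ex; exact: (allP oA x xA).
have := rval_ind hI hL (madd e (mp i0)).
rewrite csum_flatten big_map (bigD1_seq i0) ?iota_uniq ?mem_iota ?add0n ?ltnS ?hi0 //.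
rewrite big1_seq ?addr0; last first.
  move=> i /andP[hii0 iin].
  rewrite mem_iota add0n in iin; have [oAi _] := hA i (proj2 (andP iin)).
  rewrite csum_shift big_seq_cond big1 // => x /andP[xA /eqP hx].
  have := congr1 (fun f : mono n => f Mo) hx; rewrite !ffunE eqxx.
  have okx := allP oAi x xA.
  rewrite (eqP (implyP (forallP okx Mo) (eqxx _))).
  rewrite (eqP (implyP (forallP oke Mo) (eqxx _))) /= => hii.
  by case/eqP: hii0.
rewrite csum_shift /= addr0 => <-.
congr (_%:~R); apply: eq_bigl => x; apply/eqP/eqP => [->//|/madd_inj //].
Qed.
End Indep.

Section PIndep.
Variable k : fieldType.
Variable t : nat -> k.
Hypothesis hI : alg_indep_prime t.
Hypothesis k_gen : forall x : k, in_gen_field (fun y => exists i, y = t i) x.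
Variable p : nat.
Hypothesis hp : p \in [pchar k].

Lemma frob_sum (I : Type) (r : seq I) (P : pred I) (F : I -> k) :
  (\sum_(i <- r | P i) F i) ^+ p = \sum_(i <- r | P i) F i ^+ p.
Proof.
have -> : (\sum_(i <- r | P i) F i) ^+ p = pFrobenius_aut hp (\sum_(i <- r | P i) F i) by [].
by rewrite rmorph_sum.
Qed.

Lemma pindep m n0 (R : nat -> nat -> nat) (c : nat -> k) :
  (forall j i, (R j i < p)%N) -> (forall j i, (n0 <= i)%N -> R j i = 0%N) ->
  (forall j j', (j < m)%N -> (j' < m)%N -> j != j' -> exists2 i, (i < n0)%N & R j i != R j' i) ->
  \sum_(j < m) c j ^+ p * \prod_(i < n0) t i ^+ R j i = 0 ->
  forall j, (j < m)%N -> c j = 0.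
Proof.
move=> Rp R0 Rd hs.
have p_pr : prime p := pcharf_prime hp.
have p_gt0 : (0 < p)%N := prime_gt0 p_pr.
have hc : forall j, (j < m)%N -> gen_idx t predT (c j).
  move=> j _; apply: gen_mono (k_gen (c j)) => y [i ->]; by exists i.
have [N hN] := fin_gen_seq hc.
set n := maxn N n0.
have hR : forall j, (j < m)%N -> Rep t n n (c j).
  move=> j hj; apply: gen_Rep; apply: gen_idx_mono (hN j hj) => i /andP[hi _].
  have hin : (i < n)%N by rewrite (leq_trans hi) ?leq_maxl.
  by rewrite hin ltn_eqF.
have [b [A [ob nb hA]]] := common_den hR.
pose Rf (j : nat) : mono n := [ffun i : 'I_n => R j i].
have mval_Rf j : mval t (Rf j) = \prod_(i < n0) t i ^+ R j i.
  rewrite (big_ord_widen n (fun i => t i ^+ R j i)) ?leq_maxr // big_mkcond /=.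
  rewrite /mval; apply: eq_bigr => i _; rewrite ffunE; case: ifP => // /negbT.
  by rewrite -leqNgt => /R0 ->; rewrite expr0.
pose Lc := flatten [seq rshft (Rf j) (rfrob p (A j)) | j <- iota 0 m].
have hL : rval t Lc = 0.
  rewrite rval_flatten big_map.
  transitivity ((\sum_(j < m) c j ^+ p * \prod_(i < n0) t i ^+ R j i) * rval t b ^+ p);
    last by rewrite hs mul0r.
  rewrite mulr_suml -(big_mkord xpredT (fun j => c j ^+ p * \prod_(i < n0) t i ^+ R j i * rval t b ^+ p)).
  rewrite /index_iota subn0 big_seq [in RHS]big_seq; apply: eq_bigr => j.
  rewrite mem_iota add0n => /andP[_ hj].
  rewrite rval_shift rval_frob // mval_Rf -(proj2 (hA j hj)) exprMn.
  by rewrite mulrAC.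
move=> j0 hj0.
have [oA eA] := hA j0 hj0.
suff : rval t (A j0) = 0.
  by rewrite -eA => /eqP; rewrite mulf_eq0 (negbTE nb) orbF => /eqP.
apply: rval_zero => e.
have := rval_ind hI hL (madd (mscale p e) (Rf j0)).
rewrite csum_flatten big_map (bigD1_seq j0) ?iota_uniq ?mem_iota ?add0n ?hj0 //.
rewrite big1_seq ?addr0; last first.
  move=> j /andP[hjj0 jin].
  rewrite mem_iota add0n in jin; have hj := proj2 (andP jin).
  have [i hi hRi] := Rd j j0 hj hj0 hjj0.
  have hin : (i < n)%N by rewrite (leq_trans hi) ?leq_maxr.
  rewrite csum_shift_frob big1 // => x /eqP hx.
  have := congr1 (fun f : mono n => f (Ordinal hin)) hx; rewrite !ffunE /=.
  move=> /(congr1 (modn^~ p)); rewrite !(mulnC p) !modnMDl !modn_small ?Rp // => hh.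
  by rewrite hh eqxx in hRi.
rewrite csum_shift_frob /= addr0.
have -> : \sum_(x <- A j0 | madd (mscale p x.1) (Rf j0) == madd (mscale p e) (Rf j0)) x.2 ^+ p
    = \sum_(x <- A j0 | x.1 == e) x.2 ^+ p.
  apply: eq_bigl => x; apply/eqP/eqP => [/madd_inj hx|->//].
  apply/ffunP => i; have := congr1 (fun f : mono n => f i) hx; rewrite !ffunE.
  by move/eqP; rewrite eqn_pmul2l // => /eqP.
rewrite rmorph_sum.
under eq_bigr => x _ do rewrite rmorphXn.
rewrite -frob_sum -rmorph_sum => /eqP; rewrite expf_eq0 p_gt0 /= => /eqP.
by [].
Qed.
End PIndep.

Lemma frobS (R : comNzRingType) (p : nat) (hp : p \in [pchar R])
  (I : Type) (r : seq I) (P : pred I) (F : I -> R) :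
  (\sum_(i <- r | P i) F i) ^+ p = \sum_(i <- r | P i) F i ^+ p.
Proof.
have -> : (\sum_(i <- r | P i) F i) ^+ p = pFrobenius_aut hp (\sum_(i <- r | P i) F i) by [].
by rewrite rmorph_sum.
Qed.

Section LField.
Variable p : nat.
Variable k : fieldType.
Hypothesis k_char : p \in [pchar k].
Variable t : nat -> k.
Hypothesis t_indep : alg_indep_prime t.
Hypothesis k_gen : forall x : k, in_gen_field (fun y => exists i, y = t i) x.
Variable L : closedFieldType.
Variable iota : {rmorphism k -> L}.
Variable s : nat -> L.
Hypothesis s_root : forall i, s i ^+ p = iota (t i).

Lemma L_char : p \in [pchar L].
Proof. exact: (rmorph_pchar iota k_char). Qed.
Lemma p_prime : prime p. Proof. exact: pcharf_prime k_char. Qed.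
Lemma p_gt0 : (0 < p)%N. Proof. exact: prime_gt0 p_prime. Qed.
Lemma p_gt1 : (1 < p)%N. Proof. exact: prime_gt1 p_prime. Qed.

Lemma indep_s1 (c : nat -> k) :
  \sum_(j < p) iota (c j) * s 1 ^+ j = 0 -> forall j, (j < p)%N -> c j = 0.
Proof.
move=> h.
pose R (j i : nat) := if i == 1%N then (j %% p)%N else 0%N.
have h2 : \sum_(j < p) c j ^+ p * \prod_(i < 2) t i ^+ R j i = 0.
  apply/eqP; rewrite -(fmorph_eq0 iota); apply/eqP.
  have h' : 0 = (\sum_(j < p) iota (c j) * s 1 ^+ j) ^+ p by rewrite h expr0n eqn0Ngt p_gt0.
  rewrite [RHS]h' frobS ?L_char // rmorph_sum; apply: eq_bigr => j _.
  rewrite rmorphM rmorphXn big_ord_recr big_ord1 /= /R /= modn_small //.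
  rewrite expr0 mul1r exprMn -exprM mulnC exprM s_root rmorphXn; done.
apply: (pindep t_indep k_gen k_char (R:=R) (n0:=2)) h2.
- by move=> j i; rewrite /R; case: ifP => _; rewrite ?ltn_pmod ?p_gt0.
- by move=> j [|[|i]] //.
- move=> j j' hj hj' hjj; exists 1%N => //.
  by rewrite /R /= !modn_small.
Qed.

Lemma indep_s (n : nat) (c : nat -> k) :
  \sum_(j < n) iota (c j) * s j.+1 = 0 -> forall j, (j < n)%N -> c j = 0.
Proof.
move=> h.
pose R (j i : nat) : nat := ((i == j.+1) && (j < n)%N).
have h2 : \sum_(j < n) c j ^+ p * \prod_(i < n.+1) t i ^+ R j i = 0.
  apply/eqP; rewrite -(fmorph_eq0 iota); apply/eqP.
  have h' : 0 = (\sum_(j < n) iota (c j) * s j.+1) ^+ p by rewrite h expr0n eqn0Ngt p_gt0.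
  rewrite [RHS]h' frobS ?L_char // rmorph_sum; apply: eq_bigr => j _.
  rewrite rmorphM rmorphXn exprMn s_root; congr (_ * _).
  have hj : (j.+1 < n.+1)%N by rewrite ltnS.
  rewrite (bigD1 (Ordinal hj)) //= big1 ?mulr1.
    by rewrite /R /= eqxx ltn_ord expr1.
  move=> i /eqP hi; rewrite /R; case: eqP => /= [hie|]; last by rewrite expr0.
  by case: hi; apply: val_inj.
apply: (pindep t_indep k_gen k_char (R:=R) (n0:=n.+1)) h2.
- by move=> j i; rewrite /R; case: (_ && _); rewrite ?p_gt1 ?p_gt0.
- move=> j i hi; rewrite /R; case: (i =P j.+1) => [ie|//].
  by rewrite /= ltnNge -ltnS -ie hi.
- move=> j j' hj hj' hjj; exists j.+1; first by rewrite ltnS.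
  by rewrite /R eqxx eqSS eq_sym (negbTE hjj) hj.
Qed.

Definition Span (y : L) := exists c : nat -> k, y = \sum_(j < p) iota (c j) * s 1 ^+ j.

Lemma Span_iota a : Span (iota a).
Proof.
exists (fun j => if j == 0%N then a else 0).
have hp := p_gt0; case: p hp => // p' _.
rewrite big_ord_recl /= expr0 mulr1 big1 ?addr0 // => j _.
by rewrite rmorph0 mul0r.
Qed.
Lemma Span_add y z : Span y -> Span z -> Span (y + z).
Proof.
move=> [c ->] [c' ->]; exists (fun j => c j + c' j).
by rewrite -big_split; apply: eq_bigr => j _; rewrite rmorphD mulrDl.
Qed.
Lemma Span_opp y : Span y -> Span (- y).
Proof.
move=> [c ->]; exists (fun j => - c j).
by rewrite -sumrN; apply: eq_bigr => j _; rewrite rmorphN mulNr.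
Qed.
Lemma Span_scale a y : Span y -> Span (iota a * y).
Proof.
move=> [c ->]; exists (fun j => a * c j).
by rewrite mulr_sumr; apply: eq_bigr => j _; rewrite rmorphM mulrA.
Qed.
Lemma Span_0 : Span 0.
Proof. by rewrite -(rmorph0 iota); apply: Span_iota. Qed.
Lemma Span_sum I (r : seq I) (P : pred I) (F : I -> L) :
  (forall i, P i -> Span (F i)) -> Span (\sum_(i <- r | P i) F i).
Proof.
move=> h; elim/big_rec: _ => [|i x Pi Sx]; first exact: Span_0.
by apply: Span_add => //; apply: h.
Qed.
Lemma Span_s1 y : Span y -> Span (y * s 1).
Proof.
move=> [c ->].
have [p' hp'] : exists p', p = p'.+1 by exists p.-1; rewrite prednK // p_gt0.
exists (fun j => if j == 0%N then c p' * t 1 else c j.-1).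
rewrite hp' mulr_suml big_ord_recr /= big_ord_recl /= expr0 mulr1 addrC; congr (_ + _).
  by rewrite rmorphM -(s_root 1) hp' -mulrA -exprSr.
by apply: eq_bigr => j _ /=; rewrite -mulrA -exprSr add0n.
Qed.
Lemma Span_mul y z : Span y -> Span z -> Span (y * z).
Proof.
move=> hy [c ->]; rewrite mulr_sumr; apply: Span_sum => j _.
rewrite mulrCA; apply: Span_scale.
elim: (nat_of_ord j) => [|m IH]; first by rewrite expr0 mulr1.
by rewrite exprSr mulrA; apply: Span_s1.
Qed.
Lemma Span_X y m : Span y -> Span (y ^+ m).
Proof.
move=> hy; elim: m => [|m IH]; first by rewrite expr0 -(rmorph1 iota); apply: Span_iota.
by rewrite exprS; apply: Span_mul.
Qed.
Lemma Span_frob y : Span y -> exists a, y ^+ p = iota a.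
Proof.
move=> [c ->]; exists (\sum_(j < p) c j ^+ p * t 1 ^+ j).
rewrite frobS ?L_char // rmorph_sum; apply: eq_bigr => j _.
by rewrite exprMn -exprM mulnC exprM s_root rmorphM !rmorphXn.
Qed.
Lemma Span_inv y : Span y -> Span y^-1.
Proof.
move=> hy; have [->|y0] := eqVneq y 0; first by rewrite invr0; exact: Span_0.
have [a ha] := Span_frob hy.
have hp := p_gt0.
have -> : y^-1 = iota a^-1 * y ^+ p.-1.
  rewrite fmorphV -ha; apply: (mulfI y0); rewrite mulfV // mulrCA -exprS prednK //.
  by rewrite mulVf // expf_neq0.
by apply: Span_scale; apply: Span_X.
Qed.
Lemma Span_closed : subfield_closed Span.
Proof.
split.
- by rewrite -(rmorph1 iota); apply: Span_iota.
- by move=> x y hx hy; apply: Span_add => //; apply: Span_opp.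
- exact: Span_mul.
- exact: Span_inv.
Qed.

Lemma ext_Span y : in_ext_gen iota (fun y => y = s 1%N) y <-> Span y.
Proof.
split.
- apply: gen_min; first exact: Span_closed.
  move=> z [[a ->]|->]; first exact: Span_iota.
  by rewrite -[s 1]mul1r -(rmorph1 iota); apply: Span_s1; apply: Span_iota.
- move=> [c ->]; rewrite /in_ext_gen.
  apply: sfc_sum; first exact: gen_closed.
  move=> j _; apply: (sfcM (gen_closed _)); first by apply: gen_sub; left; exists (c j).
  apply: (sfcX _ (gen_closed _)); by apply: gen_sub; right.
Qed.
End LField.

Lemma horner_diff (R : comNzRingType) (q : {poly R}) a h : exists r, q.[a + h] = q.[a] + h * r.
Proof.
elim/poly_ind: q => [|q c [r hr]]; first by exists 0; rewrite !horner0 mulr0 addr0.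
exists (q.[a] + r * (a + h)).
rewrite !hornerMXaddC hr mulrDl (mulrDr q.[a]) (mulrDr h) (mulrC q.[a] h) -(mulrA h r).
rewrite -!addrA; congr (_ + _); by rewrite addrA addrC.
Qed.

Section GenPoly.
Variable R : comNzRingType.



Lemma coef_horner_stab (q : {poly {poly R}}) (a b r : {poly R}) m :
  b = a + 'X^m * r -> forall i, (i < m)%N -> (q.[b])`_i = (q.[a])`_i.
Proof.
move=> -> i hi; have [r' ->] := horner_diff q a ('X^m * r).
by rewrite coefD -mulrA coefXnM hi addr0.
Qed.

Lemma sum_split_X (F : nat -> R) (e : nat -> nat) m N :
  (1 <= m <= N)%N -> (forall i, (m <= i)%N -> (m <= e i)%N) ->
  \sum_(1 <= i < N) F i *: 'X^(e i) =
  \sum_(1 <= i < m) F i *: 'X^(e i) + 'X^m * \sum_(m <= i < N) F i *: 'X^(e i - m) :> {poly R}.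
Proof.
move=> /andP[h1 h2] he; rewrite (@big_cat_nat _ _ _ m 1 N) //=; congr (_ + _).
rewrite mulr_sumr big_nat_cond [RHS]big_nat_cond; apply: eq_bigr => i /andP[/andP[hi _] _].
by rewrite -scalerAr -exprD subnKC // he.
Qed.

Lemma sum_prodc (A B : nat -> R) n m :
  (forall i, (i < n)%N -> A i = 0) -> (forall i, (i < m)%N -> B i = 0) ->
  (forall j, (j < n + m)%N -> \sum_(i < j.+1) A i * B (j - i)%N = 0) /\
  \sum_(i < (n + m).+1) A i * B (n + m - i)%N = A n * B m.
Proof.
move=> hA hB; split.
  move=> j hj; apply: big1 => i _.
  have [hin|hni] := ltnP i n; first by rewrite hA ?mul0r.
  rewrite hB ?mulr0 //; rewrite ltn_subLR; last by have := ltn_ord i; rewrite ltnS.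
  by rewrite (leq_trans hj) // leq_add2r.
have hn : (n < (n + m).+1)%N by rewrite ltnS leq_addr.
rewrite (bigD1 (Ordinal hn)) //= addKn big1 ?addr0 // => i /eqP hi.
have [hin|hni] := ltnP i n; first by rewrite hA ?mul0r.
rewrite hB ?mulr0 //.
have hi' : (n < i)%N by rewrite ltn_neqAle hni andbT eq_sym; apply/eqP => h; apply: hi; apply: val_inj.
rewrite ltn_subLR; last by have := ltn_ord i; rewrite ltnS.
by rewrite ltn_add2r.
Qed.
End GenPoly.

Section PS.
Variable k : fieldType.
Variable L : fieldType.
Variable iota : {rmorphism k -> L}.
Variable s : nat -> L.

Definition PiN N (f : {poly {poly k}}) : {poly L} :=
  (map_poly (map_poly iota) f).[sigmaN s N].

Lemma sigma_split n N : (n < N)%N ->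
  exists r, sigmaN s N = sigmaN s n.+1 + 'X^(n.+1) * r.
Proof.
move=> hN; eexists; rewrite /sigmaN.
exact: (@sum_split_X L s (fun i => i) n.+1 N).
Qed.

Lemma pi_stab f n N : (n < N)%N -> (PiN N f)`_n = pi_coef iota s f n.
Proof.
move=> hN; have [r hr] := sigma_split hN.
by rewrite /PiN /pi_coef (coef_horner_stab _ hr).
Qed.

Lemma PiNM N f g : PiN N (f * g) = PiN N f * PiN N g.
Proof. by rewrite /PiN rmorphM hornerM. Qed.
Lemma PiND N f g : PiN N (f + g) = PiN N f + PiN N g.
Proof. by rewrite /PiN rmorphD hornerD. Qed.
Lemma PiNN N f : PiN N (- f) = - PiN N f.
Proof. by rewrite /PiN rmorphN hornerN. Qed.
Lemma PiNC N (a : k) : PiN N (a%:P)%:P = (iota a)%:P.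
Proof. by rewrite /PiN map_polyC hornerC; apply: map_polyC. Qed.

Lemma pi_coefM f g n :
  pi_coef iota s (f * g) n = \sum_(i < n.+1) pi_coef iota s f i * pi_coef iota s g (n - i)%N.
Proof.
rewrite -(pi_stab _ (ltnSn n)) PiNM coefM; apply: eq_bigr => i _.
rewrite !pi_stab //; last by rewrite ltnS leq_subr.
Qed.
Lemma pi_coefD f g n : pi_coef iota s (f + g) n = pi_coef iota s f n + pi_coef iota s g n.
Proof. by rewrite -!(pi_stab _ (ltnSn n)) PiND coefD. Qed.
Lemma pi_coefN f n : pi_coef iota s (- f) n = - pi_coef iota s f n.
Proof. by rewrite -!(pi_stab _ (ltnSn n)) PiNN coefN. Qed.
Lemma pi_coefC (a : k) n : pi_coef iota s (a%:P)%:P n = if n == 0%N then iota a else 0.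
Proof. by rewrite -!(pi_stab _ (ltnSn n)) PiNC coefC. Qed.

Lemma pi_low_mul f g n m :
  (forall i, (i < n)%N -> pi_coef iota s f i = 0) ->
  (forall i, (i < m)%N -> pi_coef iota s g i = 0) ->
  (forall j, (j < n + m)%N -> pi_coef iota s (f * g) j = 0) /\
  pi_coef iota s (f * g) (n + m) = pi_coef iota s f n * pi_coef iota s g m.
Proof.
move=> hf hg; have [h1 h2] := sum_prodc hf hg.
by split; [move=> j hj; rewrite pi_coefM h1 | rewrite pi_coefM h2].
Qed.

Lemma pi_ordM f g n m : pi_ord iota s f n -> pi_ord iota s g m ->
  pi_ord iota s (f * g) (n + m) /\
  pi_coef iota s (f * g) (n + m) = pi_coef iota s f n * pi_coef iota s g m.
Proof.
move=> [nf hf] [ng hg]; have [h1 h2] := pi_low_mul hf hg.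
by rewrite /pi_ord h2 mulf_neq0.
Qed.

Lemma pi_ord_uniq f n m : pi_ord iota s f n -> pi_ord iota s f m -> n = m.
Proof.
move=> [nf hf] [ng hg]; apply/eqP; rewrite eqn_leq.
apply/andP; split; rewrite leqNgt; apply/negP => h.
- by move/eqP: ng; rewrite hf.
- by move/eqP: nf; rewrite hg.
Qed.

Lemma pi_ord1 : pi_ord iota s 1 0.
Proof.
have h : (1 : {poly {poly k}}) = (1%:P)%:P by [].
split; first by rewrite h pi_coefC eqxx rmorph1 oner_eq0.
by [].
Qed.
End PS.

Section Decomp.
Variable p : nat.
Variable k : fieldType.
Hypothesis k_char : p \in [pchar k].
Variable t : nat -> k.
Variable L : closedFieldType.
Variable iota : {rmorphism k -> L}.
Variable s : nat -> L.
Hypothesis s_root : forall i, s i ^+ p = iota (t i).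

Definition rhoN N : {poly k} := \sum_(1 <= i < N) t i *: 'X^(i * p).
Definition wN N : {poly L} := \sum_(1 <= i < N) s i *: 'X^(i.-1).
Definition fj (f : {poly {poly k}}) j : {poly {poly k}} := \poly_(i < size f) f`_(i * p + j).
Definition Gk f j N : {poly k} := (fj f j).[rhoN N].

Lemma sigma_pow N : sigmaN s N ^+ p = map_poly iota (rhoN N).
Proof.
have hpL : p \in [pchar {poly L}] by rewrite pchar_poly (rmorph_pchar iota k_char).
rewrite /sigmaN frobS // /rhoN rmorph_sum; apply: eq_bigr => i _.
rewrite exprZn -exprM s_root; symmetry.
by rewrite -[LHS]/(map_poly iota (t i *: 'X^(i * p))) map_polyZ map_polyXn.
Qed.

Lemma sigma_X N : sigmaN s N = 'X * wN N.
Proof.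
rewrite /sigmaN /wN mulr_sumr big_nat_cond [RHS]big_nat_cond.
apply: eq_bigr => i /andP[/andP[hi _] _].
by rewrite -scalerAr -exprS prednK.
Qed.

Lemma wN0 N : (1 < N)%N -> (wN N)`_0 = s 1.
Proof.
move=> hN; rewrite /wN coef_sum big_ltn // coefZ coefXn /= mulr1.
rewrite big_nat_cond big1 ?addr0 // => i /andP[/andP[hi _] _].
by rewrite coefZ coefXn; case: i hi => [|[|i]] //= _; rewrite mulr0.
Qed.

Lemma rho_stab (g : {poly {poly k}}) a N : (a < N)%N ->
  (g.[rhoN N])`_a = (g.[rhoN a.+1])`_a.
Proof.
move=> hN.
have hp : (0 < p)%N by apply: prime_gt0; apply: pcharf_prime k_char.
have [r hr] : exists r, rhoN N = rhoN a.+1 + 'X^(a.+1) * r.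
  eexists; rewrite /rhoN.
  apply: (@sum_split_X k t (fun i => i * p)%N a.+1 N) => //.
  by move=> i hi; rewrite (leq_trans hi) // leq_pmulr.
by rewrite (coef_horner_stab _ hr).
Qed.

Lemma fj_decomp f : f = \sum_(j < p) (fj f j \Po 'X^p) * 'X^j.
Proof.
have hp : (0 < p)%N by apply: prime_gt0; apply: pcharf_prime k_char.
apply/polyP => m; rewrite coef_sum.
have hm : (m %% p < p)%N by rewrite ltn_pmod.
rewrite (bigD1 (Ordinal hm)) //= big1 ?addr0.
  have e : (m - m %% p = m %/ p * p)%N by rewrite {1}(divn_eq m p) addnK.
  rewrite coefMXn ltnNge leq_mod /= coef_comp_poly_Xn // e.
  rewrite dvdn_mull // mulnK // coef_poly -divn_eq.
  case: ltnP => // hs; rewrite nth_default //.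
  by rewrite (leq_trans hs) // leq_div.
move=> j /eqP hj; rewrite coefMXn; case: ltnP => // hjm.
rewrite coef_comp_poly_Xn //; case: ifP => // hd.
exfalso; apply: hj; apply: val_inj => /=.
have := hd; rewrite -eqn_mod_dvd // => /eqP ->.
by rewrite modn_small.
Qed.

Lemma mpM (R S : nzRingType) (g : {rmorphism R -> S}) (a b : {poly R}) :
  map_poly g (a * b) = map_poly g a * map_poly g b.
Proof. exact: rmorphM. Qed.
Lemma mpS (R S : nzRingType) (g : {rmorphism R -> S}) I (r : seq I) (F : I -> {poly R}) :
  map_poly g (\sum_(i <- r) F i) = \sum_(i <- r) map_poly g (F i).
Proof. exact: rmorph_sum. Qed.

Lemma PiN_decomp f N :
  PiN iota s N f = \sum_(j < p) map_poly iota ('X^j * Gk f j N) * wN N ^+ j.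
Proof.
rewrite {1}(fj_decomp f) /PiN mpS horner_sum; apply: eq_bigr => j _.
rewrite mpM map_comp_poly !map_polyXn hornerM horner_comp hornerXn hornerXn.
rewrite sigma_pow horner_map /= -/(Gk f j N).
rewrite sigma_X exprMn mpM map_polyXn mulrA [_ * 'X^j]mulrC.
by [].
Qed.
End Decomp.

Definition ringc (R : comNzRingType) (F : R -> Prop) := [/\ F 0, F 1,
  (forall x y, F x -> F y -> F (x + y)) & (forall x y, F x -> F y -> F (x * y))].
Definition PolyIn (R : comNzRingType) (F : R -> Prop) (P : {poly R}) := forall i, F P`_i.

Lemma ringc_sum (R : comNzRingType) (F : R -> Prop) I (r : seq I) (P : pred I) (G : I -> R) :
  ringc F -> (forall i, P i -> F (G i)) -> F (\sum_(i <- r | P i) G i).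
Proof.
move=> [h0 h1 hD hM] hG; elim/big_rec: _ => [|i x Pi Fx] //.
by apply: hD => //; apply: hG.
Qed.
Lemma ringc_X (R : comNzRingType) (F : R -> Prop) x m : ringc F -> F x -> F (x ^+ m).
Proof.
move=> [h0 h1 hD hM] hx; elim: m => [|m IH]; first by rewrite expr0.
by rewrite exprS; apply: hM.
Qed.
Lemma ringc_poly (R : comNzRingType) (F : R -> Prop) : ringc F -> ringc (PolyIn F).
Proof.
move=> hF; have [h0 h1 hD hM] := hF; split.
- by move=> i; rewrite coef0.
- by move=> i; rewrite coefC; case: ifP.
- by move=> a b ha hb i; rewrite coefD; apply: hD.
- move=> a b ha hb i; rewrite coefM; apply: ringc_sum; first exact: hF.
  by move=> j _; apply: hM.
Qed.
Lemma PolyIn_C (R : comNzRingType) (F : R -> Prop) c : ringc F -> F c -> PolyIn F c%:P.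
Proof. by move=> [h0 _ _ _] hc i; rewrite coefC; case: ifP. Qed.
Lemma PolyIn_Xn (R : comNzRingType) (F : R -> Prop) m : ringc F -> PolyIn F 'X^m.
Proof. by move=> [h0 h1 _ _] i; rewrite coefXn; case: (_ == _); rewrite ?mulr1n ?mulr0n. Qed.
Lemma PolyIn_X (R : comNzRingType) (F : R -> Prop) : ringc F -> PolyIn F 'X.
Proof. by move=> hF; rewrite -['X]expr1; apply: PolyIn_Xn. Qed.

Lemma sfc_ringc (K : fieldType) (F : K -> Prop) : subfield_closed F -> ringc F.
Proof.
move=> hF; split; [exact: sfc0 | exact: sfc1 | |].
- by move=> x y; apply: sfcD.
- by move=> x y; apply: sfcM.
Qed.

Lemma fin_bound (Q : nat -> nat -> Prop) m :
  (forall N N' j, (N <= N')%N -> Q N j -> Q N' j) ->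
  (forall j, (j < m)%N -> exists N, Q N j) -> exists N, forall j, (j < m)%N -> Q N j.
Proof.
move=> hQ; elim: m => [|m IH] h; first by exists 0%N.
have [N1 h1] := IH (fun j hj => h j (ltnW hj)).
have [N2 h2] := h m (ltnSn m).
exists (maxn N1 N2) => j; rewrite ltnS leq_eqVlt => /orP[/eqP ->|hj].
- by apply: hQ h2; apply: leq_maxr.
- by apply: hQ (h1 j hj); apply: leq_maxl.
Qed.

Lemma polyCXn (A : nzRingType) (a : A) m : a%:P ^+ m = (a ^+ m)%:P.
Proof. by elim: m => [|m IH]; rewrite ?expr0 // !exprS IH polyCM. Qed.

Lemma mapC_coef (A : comNzRingType) (g : {poly A}) (Y : {poly A}) :
  (map_poly polyC g).[Y] = \sum_(i < size g) (g`_i)%:P * Y ^+ i.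
Proof.
rewrite horner_coef size_map_polyC; apply: eq_bigr => i _.
by rewrite coef_map_id0 // polyC0.
Qed.
Lemma EV2 (A : comNzRingType) (g : {poly A}) (Y : {poly A}) (x : A) :
  ((map_poly polyC g).[Y]).[x] = g.[Y.[x]].
Proof.
rewrite mapC_coef horner_sum [RHS]horner_coef; apply: eq_bigr => i _.
by rewrite hornerM hornerC horner_exp.
Qed.

Section TRsec.
Variable p : nat.
Variable k : fieldType.
Hypothesis k_char : p \in [pchar k].
Variable t : nat -> k.
Hypothesis t_indep : alg_indep_prime t.
Hypothesis k_gen : forall x : k, in_gen_field (fun y => exists i, y = t i) x.

Lemma poly_bound (P : {poly k}) : exists N, forall l,
  gen_idx t (fun i => (i < N)%N && predT i) P`_l.
Proof.
have hc : forall l, (l < size P)%N -> gen_idx t predT P`_l.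
  move=> l _; apply: gen_mono (k_gen _) => y [i ->]; by exists i.
have [N hN] := fin_gen_seq hc.
exists N => l; have [hl|hl] := ltnP l (size P); first exact: hN.
by rewrite nth_default //; exact: (sfc0 (gen_closed _)).
Qed.

Lemma TR (g : {poly {poly k}}) : g != 0 ->
  exists i, (g.[rhoN p t i.+1])`_i != 0.
Proof.
move=> g0.
have hp : (0 < p)%N by apply: prime_gt0; apply: pcharf_prime k_char.
set d := (size g).-1.
have sg : size g = d.+1 by rewrite /d prednK // size_poly_gt0.
set q := lead_coef g.
have q0 : q != 0 by rewrite lead_coef_eq0.
set o := (size q).-1.
have qo : q`_o != 0 by rewrite /o -lead_coefE lead_coef_eq0.
have [d0|dpos] := eqVneq d 0%N.
  exists o; have -> : g = q%:P.
    rewrite {1}(@size1_polyC _ g) ?sg ?d0 // /q lead_coefE sg d0 //.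
  by rewrite hornerC.
have [N0 hN0] : exists N0, forall j l,
    gen_idx t (fun i => (i < N0)%N && predT i) (g`_j)`_l.
  have mono : forall N N' j, (N <= N')%N -> (forall l,
      gen_idx t (fun i => (i < N)%N && predT i) (g`_j)`_l) -> forall l,
      gen_idx t (fun i => (i < N')%N && predT i) (g`_j)`_l.
    move=> N N' j hN h l; apply: gen_idx_mono (h l) => i /andP[hi _].
    by rewrite (leq_trans hi hN).
  have [N0 h] := @fin_bound (fun N j => forall l,
      gen_idx t (fun i => (i < N)%N && predT i) (g`_j)`_l) (size g) mono
      (fun j _ => poly_bound g`_j).
  exists N0 => j l; have [hj|hj] := ltnP j (size g); first exact: h.
  by rewrite (nth_default _ hj) coef0; exact: (sfc0 (gen_closed _)).
pose M := N0.+1.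
pose KM := gen_idx t (fun i => i != M).
have KMr : ringc KM by apply: sfc_ringc; apply: gen_closed.
have hg : forall j l, KM (g`_j)`_l.
  move=> j l; apply: gen_idx_mono (hN0 j l) => i /andP[hi _].
  by rewrite neq_ltn (leq_trans hi) ?leqnSn.
pose n := (M * p * d + o)%N.
exists n; apply/negP => /eqP H0.
pose N := n.+1.
have hMN : (M < N)%N.
  rewrite ltnS /n (leq_trans _ (leq_addr _ _)) // -mulnA leq_pmulr //.
  by rewrite muln_gt0 hp lt0n.
pose rho' := \sum_(1 <= i < N | i != M) t i *: 'X^(i * p).
have hrho : rhoN p t N = t M *: 'X^(M * p) + rho'.
  rewrite /rhoN (bigD1_seq M) //= ?iota_uniq // mem_index_iota hMN andbT.
  by [].
have rhoIn : PolyIn KM rho'.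
  apply: ringc_sum; first exact: ringc_poly.
  move=> i hi; rewrite -mul_polyC; have [_ _ _ hm] := ringc_poly KMr.
  apply: hm; last exact: PolyIn_Xn.
  by apply: PolyIn_C => //; apply: gen_sub; exists i.
pose c : {poly k} := 'X^(M * p).
have c0 : c != 0 by rewrite /c expf_neq0 // polyX_eq0.
pose Y : {poly {poly k}} := rho'%:P + 'X * c%:P.
pose Phi := (map_poly polyC g).[Y].
have Hev : g.[rhoN p t N] = Phi.[(t M)%:P].
  rewrite /Phi EV2; congr (g.[_]).
  by rewrite hrho /Y hornerD hornerC hornerM hornerX hornerC mul_polyC addrC.
have Hcoef : (g.[rhoN p t N])`_n = \sum_(l < size Phi) (Phi`_l)`_n * t M ^+ l.
  rewrite Hev horner_coef coef_sum; apply: eq_bigr => l _.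
  by rewrite polyCXn coefMC.
have KMr1 := ringc_poly KMr.
have KMr2 := ringc_poly KMr1.
have PhiIn : PolyIn (PolyIn KM) Phi.
  rewrite /Phi mapC_coef; apply: ringc_sum; first exact: KMr2.
  move=> j _; have [_ _ hD hm] := KMr2; apply: (hm).
    by apply: (PolyIn_C KMr1); move=> l; apply: hg.
  apply: (ringc_X _ KMr2); rewrite /Y; apply: (hD).
    exact: (PolyIn_C KMr1).
  apply: (hm); first exact: (PolyIn_X KMr1).
  exact: (PolyIn_C KMr1 (PolyIn_Xn _ KMr)).
have Ylead : size Y = 2%N /\ lead_coef Y = c.
  have e : Y = c *: 'X + rho'%:P by rewrite /Y addrC mulrC mul_polyC.
  have sX : size (c *: 'X) = 2%N by rewrite size_scale // size_polyX.
  have sC : (size rho'%:P < size (c *: 'X))%N.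
    by rewrite sX (leq_ltn_trans (size_polyC_leq1 _)).
  by rewrite e size_addl // lead_coefDl // lead_coefZ lead_coefX mulr1.
have Y0 : Y != 0 by rewrite -size_poly_gt0 (proj1 Ylead).
have Ypow : forall j, size (Y ^+ j) = j.+1 /\ lead_coef (Y ^+ j) = c ^+ j.
  move=> j; rewrite lead_coef_exp (proj2 Ylead); split=> //.
  have := size_exp Y j; rewrite (proj1 Ylead) /= mul1n => hs.
  by rewrite -{2}hs prednK // size_poly_gt0 expf_neq0.
have PhiD : Phi`_d = q * c ^+ d.
  rewrite /Phi mapC_coef coef_sum sg big_ord_recr /= big1 ?add0r.
    have hYd : (Y ^+ d)`_d = c ^+ d by rewrite -(proj2 (Ypow d)) lead_coefE (proj1 (Ypow d)).
    by rewrite coefCM hYd /q lead_coefE sg.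
  move=> j _; have hs : (size (Y ^+ j) <= d)%N by rewrite (proj1 (Ypow j)) ltn_ord.
  by rewrite coefCM (nth_default _ hs) mulr0.
have PhiDn : (Phi`_d)`_n = q`_o.
  by rewrite PhiD /c -exprM coefMXn /n ltnNge leq_addr /= addKn.
have sPhi : (d < size Phi)%N.
  rewrite ltnNge; apply/negP => h; move: qo.
  by rewrite -PhiDn (nth_default _ h) coef0 eqxx.
have T := @transc k t t_indep M (size Phi).-1 (fun l => (Phi`_l)`_n) (fun l _ => PhiIn l n).
rewrite prednK ?(leq_ltn_trans (leq0n d) sPhi) // -Hcoef H0 in T.
have := T erefl d; rewrite -ltnS prednK ?(leq_ltn_trans (leq0n d) sPhi) // => /(_ sPhi).
by rewrite PhiDn => /eqP; rewrite (negbTE qo).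
Qed.
End TRsec.

Section KEYsec.
Variable p : nat.
Variable k : fieldType.
Hypothesis k_char : p \in [pchar k].
Variable t : nat -> k.
Hypothesis t_indep : alg_indep_prime t.
Hypothesis k_gen : forall x : k, in_gen_field (fun y => exists i, y = t i) x.
Variable L : closedFieldType.
Variable iota : {rmorphism k -> L}.
Variable s : nat -> L.
Hypothesis s_root : forall i, s i ^+ p = iota (t i).

Lemma KEY f : f != 0 -> exists m (c : nat -> k),
  pi_ord iota s f m /\ pi_coef iota s f m = \sum_(j < p) iota (c j) * s 1 ^+ j.
Proof.
move=> f0.
have hp : (0 < p)%N by apply: prime_gt0; apply: pcharf_prime k_char.
pose H (j i : nat) := ('X^j * Gk p t f j i.+1)`_i.
have Hstab : forall j i N, (i < N)%N -> ('X^j * Gk p t f j N)`_i = H j i.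
  move=> j i N hN; rewrite /H !coefXnM; case: ltnP => // hij.
  rewrite /Gk (rho_stab k_char) ?(leq_ltn_trans (leq_subr _ _) hN) //.
  by rewrite [in RHS](rho_stab k_char) // ltnS leq_subr.
have [j0 hj0] : exists j : 'I_p, fj p f j != 0.
  case: (boolP [exists j : 'I_p, fj p f j != 0]) => [/existsP //|].
  rewrite negb_exists => /forallP h.
  exfalso; move/negP: f0; apply; apply/eqP; rewrite (fj_decomp k_char f) big1 // => j _.
  by rewrite (eqP (negPn (h j))) comp_poly0 mul0r.
have [a ha] := TR k_char t_indep k_gen hj0.
pose P m := [exists j : 'I_p, H j m != 0].
have exP : exists m, P m.
  exists (a + j0)%N; apply/existsP; exists j0.
  rewrite /H coefXnM ltnNge leq_addl /= addnK /Gk (rho_stab k_char) //.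
  by rewrite ltnS leq_addr.
case: (ex_minnP exP) => m0 Pm0 minm.
have low : forall (j : 'I_p) i, (i < m0)%N -> H j i = 0.
  move=> j i hi; apply/eqP; apply/negPn/negP => hn.
  have := minm i (introT existsP (ex_intro _ j hn)).
  by rewrite leqNgt hi.
pose N := m0.+2.
have hN : (1 < N)%N by [].
have coefA : forall (j : 'I_p) i, (i < N)%N ->
    (map_poly iota ('X^j * Gk p t f j N))`_i = iota (H j i).
  by move=> j i hi; rewrite coef_map Hstab.
have W0 : forall j : nat, (wN s N ^+ j)`_0 = s 1 ^+ j.
  by move=> j; rewrite -horner_coef0 horner_exp horner_coef0 wN0.
have term : forall (j : 'I_p) i, (i <= m0)%N ->
    (map_poly iota ('X^j * Gk p t f j N) * wN s N ^+ j)`_i =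
    if i == m0 then iota (H j m0) * s 1 ^+ j else 0.
  move=> j i hi.
  have hA : forall i', (i' < m0)%N ->
      (map_poly iota ('X^j * Gk p t f j N))`_i' = 0.
    by move=> i' hi'; rewrite coefA ?low ?rmorph0 // (ltn_trans hi').
  have hB : forall i', (i' < 0)%N -> (wN s N ^+ j)`_i' = 0 by [].
  have [h1 h2] := sum_prodc hA hB; rewrite addn0 in h1 h2.
  case: eqP => [->|/eqP him].
    by rewrite coefM h2 coefA // W0.
  by rewrite coefM h1 // ltn_neqAle him hi.
have piE : forall i, (i <= m0)%N -> pi_coef iota s f i =
    if i == m0 then \sum_(j < p) iota (H j m0) * s 1 ^+ j else 0.
  move=> i hi; rewrite -(pi_stab iota s f (_ : (i < N)%N)); last by rewrite (leq_ltn_trans hi).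
  rewrite (PiN_decomp k_char s_root) coef_sum.
  under eq_bigr => j _ do rewrite term //.
  by case: eqP => // _; rewrite big1.
exists m0, (fun j => H j m0); split; last by rewrite piE ?eqxx.
split; last by move=> i hi; rewrite piE ?(ltnW hi) // ltn_eqF.
rewrite piE // eqxx; apply/eqP => hz.
have := @indep_s1 _ _ k_char _ t_indep k_gen _ _ _ s_root (fun j => H j m0) hz.
move=> hall; case/existsP: Pm0 => j /eqP hj; apply: hj; exact: hall j (ltn_ord j).
Qed.
End KEYsec.

Section Final.
Variable p : nat.
Variable k : fieldType.
Hypothesis k_char : p \in [pchar k].
Variable t : nat -> k.
Hypothesis t_indep : alg_indep_prime t.
Hypothesis k_gen : forall x : k, in_gen_field (fun y => exists i, y = t i) x.
Variable L : closedFieldType.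
Variable iota : {rmorphism k -> L}.
Variable s : nat -> L.
Hypothesis s_root : forall i, s i ^+ p = iota (t i).

Local Notation pc := (pi_coef iota s).
Definition wit (z : QF k) (f g : {poly {poly k}}) (n : nat) :=
  [/\ g != 0, z = tofracK f / tofracK g, pi_ord iota s g n &
      forall m, (m < n)%N -> pc f m = 0].

Lemma tofracK_neq0 (g : {poly {poly k}}) : g != 0 -> tofracK g != 0.
Proof. by move=> g0; rewrite /tofracK tofrac_eq0. Qed.

Lemma WD z f g n f' g' n' : wit z f g n -> wit z f' g' n' ->
  pc f n / pc g n = pc f' n' / pc g' n'.
Proof.
move=> [g0 ez [gn hg] hf] [g0' ez' [gn' hg'] hf'].
have e1 : f * g' = f' * g.
  apply/eqP; rewrite -tofrac_eq !tofracM; apply/eqP.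
  have G0 := tofracK_neq0 g0; have G0' := tofracK_neq0 g0'.
  rewrite -[X in X * _](divfK G0) -/(tofracK f) -/(tofracK g) -/(tofracK g') -/(tofracK f').
  rewrite -ez ez' mulrAC divfK //.
have [_ h1] := pi_low_mul hf hg'.
have [_ h2] := pi_low_mul hf' hg.
apply/eqP; rewrite eqr_div //; apply/eqP.
by rewrite -h1 e1 addnC h2.
Qed.

Definition winh : inhabited ({poly {poly k}} * {poly {poly k}} * nat) := inhabits (0, 0, 0%N).
Definition phi (z : QF k) : L :=
  let w := epsilon winh (fun w => wit z w.1.1 w.1.2 w.2) in
  pc w.1.1 w.2 / pc w.1.2 w.2.

Lemma phi_spec z f g n : wit z f g n -> phi z = pc f n / pc g n.
Proof.
move=> h.
have := epsilon_spec winh (fun w => wit z w.1.1 w.1.2 w.2) (ex_intro _ (f, g, n) h).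
rewrite /phi; set w := epsilon _ _ => hw.
exact: WD hw h.
Qed.

Lemma inV_wit z : in_V iota s z -> exists f g n, wit z f g n.
Proof. by []. Qed.

Lemma phi_add z w : in_V iota s z -> in_V iota s w -> phi (z + w) = phi z + phi w.
Proof.
move=> [f [g [n hz]]] [f' [g' [n' hw]]].
have [g0 ez og hf] := hz; have [g0' ew og' hf'] := hw.
have [ogg eg] := pi_ordM og og'.
have [g0n _] := og; have [g0n' _] := og'.
have [l1 e1] := pi_low_mul hf (proj2 og').
have [l2 e2] := pi_low_mul hf' (proj2 og).
have hzw : wit (z + w) (f * g' + f' * g) (g * g') (n + n').
  split => //.
  - by rewrite mulf_neq0.
  - rewrite ez ew /tofracK addf_div ?tofracK_neq0 // -!tofracM -tofracD; congr (_ / _).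
  - move=> m hm; rewrite pi_coefD l1 // l2 ?add0r //; by rewrite addnC.
rewrite (phi_spec hz) (phi_spec hw) (phi_spec hzw) pi_coefD e1 addnC e2 addnC eg.
by rewrite addf_div // mulrC [pc f' n' * _]mulrC.
Qed.

Lemma phi_mul z w : in_V iota s z -> in_V iota s w -> phi (z * w) = phi z * phi w.
Proof.
move=> [f [g [n hz]]] [f' [g' [n' hw]]].
have [g0 ez og hf] := hz; have [g0' ew og' hf'] := hw.
have [ogg eg] := pi_ordM og og'.
have [l1 e1] := pi_low_mul hf hf'.
have hzw : wit (z * w) (f * f') (g * g') (n + n').
  split => //.
  - by rewrite mulf_neq0.
  - by rewrite ez ew /tofracK mulf_div -!tofracM.
rewrite (phi_spec hz) (phi_spec hw) (phi_spec hzw) e1 eg.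
by rewrite mulf_div.
Qed.

Lemma phi_const (a : k) : phi (tofracK (a%:P)%:P) = iota a.
Proof.
have h : wit (tofracK (a%:P)%:P) (a%:P)%:P 1 0.
  split => //.
  - exact: oner_neq0.
  - by rewrite /tofracK tofrac1 divr1.
  - exact: pi_ord1.
rewrite (phi_spec h) pi_coefC.
have -> : (1 : {poly {poly k}}) = (1%:P)%:P by [].
by rewrite pi_coefC /= rmorph1 divr1.
Qed.

Lemma phi_ker z : in_V iota s z -> (phi z = 0 <-> in_mV iota s z).
Proof.
move=> [f [g [n hz]]]; have [g0 ez [gn hg] hf] := hz.
rewrite (phi_spec hz); split.
- move=> /eqP; rewrite mulf_eq0 invr_eq0 (negbTE gn) orbF => /eqP fn.
  exists f, g, n; split => // m; rewrite leq_eqVlt => /orP[/eqP ->|]; first exact: fn.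
  exact: hf.
- move=> [f' [g' [n' [g0' ez' og' hf']]]].
  have hz' : wit z f' g' n' by split => // m hm; apply: hf'; apply: ltnW.
  by rewrite -(phi_spec hz) (phi_spec hz') hf' // mul0r.
Qed.

Lemma pc0 n : pc 0 n = 0.
Proof.
have -> : (0 : {poly {poly k}}) = (0%:P)%:P by rewrite !polyC0.
by rewrite pi_coefC rmorph0; case: ifP.
Qed.

Lemma coef_Span f n : (forall m, (m < n)%N -> pc f m = 0) -> Span p iota s (pc f n).
Proof.
move=> hf; have [->|f0] := eqVneq f 0; first by rewrite pc0; exact: (Span_0 k_char).
have [m [c [[fm hm] ec]]] := KEY k_char t_indep k_gen s_root f0.
have [hmn|hnm] := ltnP m n; first by move/eqP: fm; rewrite hf.
move: hnm; rewrite leq_eqVlt => /orP[/eqP ->|hnm].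
  by rewrite ec; exists c.
rewrite hm //; exact: (Span_0 k_char).
Qed.

Lemma phi_img z : in_V iota s z -> in_ext_gen iota (fun y => y = s 1%N) (phi z).
Proof.
move=> [f [g [n hz]]]; have [g0 ez og hf] := hz.
rewrite (phi_spec hz); apply/(ext_Span k_char s_root).
apply: (sfc_div (Span_closed k_char s_root)); first exact: coef_Span.
exact: coef_Span (proj2 og).
Qed.

Lemma PiN_Cpoly N (a : {poly k}) : PiN iota s N a%:P = map_poly iota a.
Proof. by rewrite /PiN map_polyC hornerC. Qed.

Lemma phi_surj y : in_ext_gen iota (fun y => y = s 1%N) y ->
  exists2 z, in_V iota s z & phi z = y.
Proof.
move/(ext_Span k_char s_root) => [c ->].
have hp : (0 < p)%N by apply: prime_gt0; apply: pcharf_prime k_char.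
set q := p.-1.
pose f : {poly {poly k}} := \sum_(j < p) (c j *: 'X^(q - j))%:P * 'X^j.
pose g : {poly {poly k}} := ('X^q)%:P.
have PiG : forall N, PiN iota s N g = 'X^q.
  by move=> N; rewrite PiN_Cpoly; apply: map_polyXn.
have PiF : forall N, PiN iota s N f = \sum_(j < p) iota (c j) *: ('X^q * wN s N ^+ j).
  move=> N; rewrite /PiN mpS horner_sum; apply: eq_bigr => j _.
  rewrite mpM hornerM map_polyC hornerC map_polyXn hornerXn.
  rewrite -[_ (c j *: 'X^(q - j))]/(map_poly iota (c j *: 'X^(q - j))) map_polyZ map_polyXn.
  rewrite sigma_X exprMn -scalerAl mulrA -exprD subnK //.
  by rewrite /q -ltnS prednK.
have cg : forall i, pc g i = (i == q)%:R.
  by move=> i; rewrite -(pi_stab iota s g (ltnSn i)) PiG coefXn.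
have cf : forall i, (i <= q)%N ->
    pc f i = if i == q then \sum_(j < p) iota (c j) * s 1 ^+ j else 0.
  move=> i hi; rewrite -(pi_stab iota s f (_ : (i < q.+2)%N)); last by rewrite ltnS (leq_trans hi).
  rewrite PiF coef_sum; case: eqP => [->|/eqP hiq].
    apply: eq_bigr => j _; rewrite coefZ coefXnM ltnn subnn.
    by rewrite -horner_coef0 horner_exp horner_coef0 wN0.
  apply: big1 => j _; rewrite coefZ coefXnM.
  have hiq' : (i < q)%N by rewrite ltn_neqAle hiq hi.
  by rewrite hiq' mulr0.
have hw : wit (tofracK f / tofracK g) f g q.
  split => //.
  - by rewrite polyC_eq0 expf_neq0 // polyX_eq0.
  - split; first by rewrite cg eqxx oner_eq0.
    by move=> m hm; rewrite cg ltn_eqF.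
  - by move=> m hm; rewrite cf ?ltn_eqF // ltnW.
exists (tofracK f / tofracK g); first by exists f, g, q.
by rewrite (phi_spec hw) cf // eqxx cg eqxx divr1.
Qed.
End Final.

Unset Implicit Arguments.

Theorem mainTheorem13
  (p : nat) (p_prime : prime p)
  (k : fieldType) (k_char : p \in [pchar k])
  (t : nat -> k) (t_indep : alg_indep_prime t)
  (k_gen : forall x : k, in_gen_field (fun y => exists i, y = t i) x)
  (L : closedFieldType) (iota : {rmorphism k -> L})
  (L_alg : forall x : L, exists q : {poly k}, q != 0 /\ root (map_poly iota q) x)
  (s : nat -> L) (s_root : forall i, s i ^+ p = iota (t i)) :
  (* pi : k[u,v] -> kbar[[x]], u |-> x, v |-> sigma(x), is injective *)
  (forall P : {poly {poly k}}, P != 0 -> exists n, pi_coef iota s P n != 0) /\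
  (* V / m_V ~= k(t_1^{1/p}) as k-algebras: a k-algebra map phi on V onto
     k(s 1) whose kernel is m_V *)
  (exists phi : QF k -> L,
     [/\ forall z w, in_V iota s z -> in_V iota s w -> phi (z + w) = phi z + phi w,
         forall z w, in_V iota s z -> in_V iota s w -> phi (z * w) = phi z * phi w,
         forall a : k, phi (tofracK (a%:P)%:P) = iota a &
         forall z, in_V iota s z -> (phi z = 0 <-> in_mV iota s z)] /\
     (forall z, in_V iota s z -> in_ext_gen iota (fun y => y = s 1%N) (phi z)) /\
     (forall y, in_ext_gen iota (fun y => y = s 1%N) y ->
                   exists2 z, in_V iota s z & phi z = y)) /\
  (* k(t_1^{1/p}) is a finite extension of k *)
  (exists (n : nat) (e : 'I_n -> L),
     (forall i, in_ext_gen iota (fun y => y = s 1%N) (e i)) /\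
     spans_over iota (in_ext_gen iota (fun y => y = s 1%N)) e) /\
  (* k({t_i^{1/p} | i >= 1}) has infinite degree over k *)
  (forall n : nat, exists e : 'I_n -> L,
     (forall i, in_ext_gen iota (fun y => exists j, (0 < j)%N /\ y = s j) (e i)) /\
     lin_indep_over iota e).
Proof.
split.
  move=> P P0; have [m [c [[hm _] _]]] := KEY k_char t_indep k_gen s_root P0.
  by exists m.
split.
  exists (phi iota s); split.
    split.
    - by move=> z w hz hw; apply: phi_add.
    - by move=> z w hz hw; apply: phi_mul.
    - exact: phi_const.
    - by move=> z hz; apply: phi_ker.
  split.
  - by move=> z hz; apply: (phi_img k_char t_indep k_gen s_root).
  - by move=> y hy; apply: (phi_surj k_char s_root).
split.
  exists p, (fun j : 'I_p => s 1%N ^+ j); split.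
  - move=> j; rewrite /in_ext_gen; apply: (sfcX _ (gen_closed _)).
    by apply: gen_sub; right.
  - move=> x /(ext_Span k_char s_root) [c ->]; by exists (fun j => c j).
move=> n; exists (fun i : 'I_n => s i.+1); split.
  by move=> i; apply: gen_sub; right; exists i.+1.
move=> c hc i.
pose c' (j : nat) := if insub j is Some o then c o else 0.
have hc' : \sum_(j < n) iota (c' j) * s j.+1 = 0.
  rewrite -[RHS]hc; apply: eq_bigr => j _; by rewrite /c' valK.
have := indep_s k_char t_indep k_gen s_root hc' (ltn_ord i).
by rewrite /c' valK.
Qed.
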